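(* Let $n\ge 1$, let $f$ be the standard Gaussian density on $\mathbb{R}^n$, and let $\phi:\mathbb{R}^n\to\mathbb{R}_+$ be a non-negative measurable function with $E=\int \phi(\mathbf{x})f(\mathbf{x})\,\mathrm{d}\mathbf{x}\in(0,\infty)$. Let $g^*=\phi f/E$, and let $\mathbf{m}^*=\mathbb{E}_{g^*}(\mathbf{X})$ and $\Sigma^*=\mathrm{Var}_{g^*}(\mathbf{X})$ be the mean and covariance matrix of $g^*$ (assumed to exist, with $\Sigma^*$ symmetric positive definite). Let $(\lambda^*_i,\mathbf{d}^*_i)$, $i=1,\dots,n$, be eigenpairs of $\Sigma^*$ (i.e. $\Sigma^*\mathbf{d}^*_i=\lambda^*_i\mathbf{d}^*_i$, with $\mathbf{d}^*_1,\dots,\mathbf{d}^*_n$ an orthonormal basis of $\mathbb{R}^n$) ranked in increasing $\ell$-order, i.e. $\ell(\lambda^*_1)\le \cdots\le \ell(\lambda^*_n)$, where $\ell(x)=\log(x)-x+1$ for $x>0$. Then for every $1\le k\le n$, the solution $\Sigma^*_k$ of the minimization problem $$\Sigma^*_k=\arg\min\{D(g^*,g_{\mathbf{m}^*,\Sigma}) : \Sigma\in\mathcal{L}_{n,k}\}$$ is given by $$\Sigma^*_k=I_n+\sum_{i=1}^k(\lambda^*_i-1)\,\mathbf{d}^*_i(\mathbf{d}^*_i)^\top .$$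
   Context: For $\mathbf{m}\in\mathbb{R}^n$ and $\Sigma$ a symmetric positive definite $n\times n$ matrix, $g_{\mathbf{m},\Sigma}$ denotes the Gaussian density on $\mathbb{R}^n$ with mean $\mathbf{m}$ and covariance $\Sigma$. For densities $p,h$ with $p$ absolutely continuous with respect to $h$, the Kullback--Leibler divergence is $D(p,h)=\int \log\big(p(\mathbf{x})/h(\mathbf{x})\big)p(\mathbf{x})\,\mathrm{d}\mathbf{x}$. The set $\mathcal{L}_{n,k}$ is $$\mathcal{L}_{n,k}=\Big\{\sum_{i=1}^k(\alpha_i-1)\frac{\mathbf{d}_i\mathbf{d}_i^\top}{\|\mathbf{d}_i\|^2}+I_n : \alpha_1,\dots,\alpha_k>0,\ \mathbf{d}_1,\dots,\mathbf{d}_k\in\mathbb{R}^n\setminus\{0\}\text{ pairwise orthogonal}\Big\},$$ where $I_n$ is the $n\times n$ identity matrix. *)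

(* Defs.v *)
From HB Require Import structures.
From mathcomp Require Import all_boot all_order all_algebra.
From mathcomp Require Import all_classical all_reals all_analysis.
Set Implicit Arguments. Unset Strict Implicit. Unset Printing Implicit Defensive.
Import Order.TTheory GRing.Theory Num.Theory.
Local Open Scope ring_scope.

(* Iterated Lebesgue integral over R^n of a function with values in \bar R.
   For non-negative measurable functions this is (Tonelli) the integral
   against n-dimensional Lebesgue measure. *)
Fixpoint iint (R : realType) (n : nat) : ('cV[R]_n -> \bar R) -> \bar R :=
  match n with
  | 0 => fun f => f 0
  | m.+1 => fun f : 'cV[R]_m.+1 -> \bar R =>
      integral (@lebesgue_measure R) [set: R]
        (fun x : R => iint (fun v : 'cV[R]_m =>
           f (col_mx (const_mx x : 'cV[R]_1) v)))
  end.

Definition Rn_int (R : realType) (n : nat) (f : 'cV[R]_n -> \bar R) : \bar R :=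
  (iint (fun x => f^\+ x) - iint (fun x => f^\- x))%E.

(* Borel measurability of a real function on R^n (R^n carries the product
   sigma-algebra, i.e. the one generated by the coordinates). *)
Definition Rn_measurable (R : realType) (n : nat) (phi : 'cV[R]_n -> R) : Prop :=
  measurable_fun [set: n.-tuple R] (fun t => phi (\col_i tnth t i)).

Definition gauss (R : realType) (n : nat) (m : 'cV[R]_n) (S : 'M[R]_n)
    (x : 'cV[R]_n) : R :=
  (Num.sqrt ((2 * pi) ^+ n * \det S))^-1 *
  expR (- (((x - m)^T *m invmx S *m (x - m)) 0 0) / 2).

(* Kullback--Leibler divergence D(p,h) = \int log(p/h) p  (with 0 log 0 = 0,
   since ln 0 = 0 in mathcomp). *)
Definition KL (R : realType) (n : nat) (p h : 'cV[R]_n -> R) : \bar R :=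
  Rn_int (fun x => (ln (p x / h x) * p x)%:E).

Definition sqnorm (R : realType) (n : nat) (d : 'cV[R]_n) : R := (d^T *m d) 0 0.

Definition Lnk (R : realType) (n k : nat) (S : 'M[R]_n) : Prop :=
  exists (alpha : 'I_k -> R) (d : 'I_k -> 'cV[R]_n),
    [/\ forall i, 0 < alpha i,
        forall i, d i != 0,
        forall i j, i != j -> (d i)^T *m d j = 0 &
        S = \sum_(i < k) ((alpha i - 1) / sqnorm (d i)) *: (d i *m (d i)^T)
            + 1%:M].

Definition ell (R : realType) (x : R) : R := ln x - x + 1.

(* Main.v *)
Require Import Defs.
From HB Require Import structures.
From mathcomp Require Import all_boot all_order all_algebra.
From mathcomp Require Import all_classical all_reals all_analysis.
From mathcomp Require Import measurable_realfun.
From mathcomp Require Import lra ring zify.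
Import Order.TTheory GRing.Theory Num.Theory.
Local Open Scope ring_scope. Local Open Scope classical_set_scope.
Set Implicit Arguments. Unset Strict Implicit. Unset Printing Implicit Defensive.

Section Meas.
Variable R : realType.

Definition tcol n (t : n.-tuple R) : 'cV[R]_n := \col_i tnth t i.

Lemma tcol_cons m (x : R) (t : m.-tuple R) :
  col_mx (const_mx x : 'cV[R]_1) (tcol t) = tcol [tuple of x :: t].
Proof.
apply/matrixP => i j; rewrite [RHS]mxE.
case: (splitP i) => [i0 Hi|i0 Hi].
  have -> : i = lshift m i0 by apply/val_inj.
  rewrite col_mxEu mxE (tnth_nth x) /=. rewrite (ord1 i0). by [].
have -> : i = rshift 1 i0 by apply/val_inj.
by rewrite col_mxEd mxE /= !(tnth_nth x) /=.
Qed.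

Local Open Scope ereal_scope.
Definition mes n (f : 'cV[R]_n -> \bar R) :=
  measurable_fun [set: n.-tuple R] (fun t => f (tcol t)).

Lemma iint_ge0 n (f : 'cV[R]_n -> \bar R) : (forall x, 0 <= f x) -> 0 <= iint f.
Proof. elim: n f => [|n IH] f f0 /=; first exact: f0.
by apply: integral_ge0 => x _; exact: IH. Qed.

Lemma meas_cons_map d (T : measurableType d) m :
  measurable_fun [set: (T * R) * m.-tuple R]
    (fun q => (q.1.1, [the m.+1.-tuple R of q.1.2 :: q.2])).
Proof.
apply: measurable_fun_pair.
  exact: measurableT_comp.
apply: measurable_cons; last exact: measurable_snd.
exact: measurableT_comp.
Qed.

Lemma iint_meas_param m : forall d (T : measurableType d)
  (f : T -> 'cV[R]_m -> \bar R),
  (forall t v, 0 <= f t v) ->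
  measurable_fun [set: T * m.-tuple R] (fun p => f p.1 (tcol p.2)) ->
  measurable_fun [set: T] (fun t => iint (f t)).
Proof.
elim: m => [|m IH] d T f f0 mf /=.
  have -> : (fun t => f t 0%R) =
      (fun p : T * 0.-tuple R => f p.1 (tcol p.2)) \o (fun t => (t, [tuple])).
    by apply/funext => t /=; congr f; apply/matrixP => -[].
  by apply: measurableT_comp mf _; exact: measurable_fun_pair.
set g := fun (q : T * R) (v : 'cV[R]_m) => f q.1 (col_mx (const_mx q.2 : 'cV[R]_1) v).
have mg : measurable_fun setT (fun q => iint (g q)).
  apply: IH; first by move=> *; exact: f0.
  have -> : (fun p : (T * R) * m.-tuple R => g p.1 (tcol p.2)) =
     (fun p => f p.1 (tcol p.2)) \o
     (fun q : (T * R) * m.-tuple R => (q.1.1, [the m.+1.-tuple R of q.1.2 :: q.2])).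
    by apply/funext => q /=; rewrite /g tcol_cons.
  by apply: measurableT_comp mf _; exact: meas_cons_map.
exact: (measurable_fun_fubini_tonelli_F (m2 := lebesgue_measure)
   (fun q => iint (g q)) mg (fun q => iint_ge0 (fun v => f0 _ _))).
Qed.

Lemma mes_section m (f : 'cV[R]_m.+1 -> \bar R) (x : R) : mes f ->
  mes (fun v : 'cV[R]_m => f (col_mx (const_mx x : 'cV[R]_1) v)).
Proof.
move=> mf; rewrite /mes.
have -> : (fun t : m.-tuple R => f (col_mx (const_mx x : 'cV[R]_1) (tcol t))) =
   (fun t => f (tcol t)) \o (fun t : m.-tuple R => [the m.+1.-tuple R of x :: t]).
  by apply/funext => t /=; rewrite tcol_cons.
apply: measurableT_comp mf _.
exact: measurable_cons.
Qed.

Lemma mes_outer m (f : 'cV[R]_m.+1 -> \bar R) : (forall x, 0 <= f x) -> mes f ->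
  measurable_fun [set: R] (fun x => iint (fun v : 'cV[R]_m => f (col_mx (const_mx x : 'cV[R]_1) v))).
Proof.
move=> f0 mf.
apply: (@iint_meas_param m _ R (fun x v => f (col_mx (const_mx x : 'cV[R]_1) v))).
  by move=> *; exact: f0.
have -> : (fun p : R * m.-tuple R => f (col_mx (const_mx p.1 : 'cV[R]_1) (tcol p.2))) =
   (fun t => f (tcol t)) \o (fun p : R * m.-tuple R => [the m.+1.-tuple R of p.1 :: p.2]).
  by apply/funext => t /=; rewrite tcol_cons.
apply: measurableT_comp mf _.
exact: measurable_cons.
Qed.

Lemma iintD n (f g : 'cV[R]_n -> \bar R) : (forall x, 0 <= f x) -> (forall x, 0 <= g x) ->
  mes f -> mes g -> iint (fun x => f x + g x) = iint f + iint g.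
Proof.
elim: n f g => [|n IH] f g f0 g0 mf mg //=.
rewrite -ge0_integralD //; last 4 first.
- by move=> x _; apply: iint_ge0 => v; exact: f0.
- exact: mes_outer.
- by move=> x _; apply: iint_ge0 => v; exact: g0.
- exact: mes_outer.
apply: eq_integral => x _; apply: IH => //; exact: mes_section.
Qed.

Lemma iintZ n (f : 'cV[R]_n -> \bar R) (c : R) : (0 <= c)%R -> (forall x, 0 <= f x) ->
  mes f -> iint (fun x => c%:E * f x) = c%:E * iint f.
Proof.
elim: n f => [|n IH] f c0 f0 mf //=.
rewrite -ge0_integralZl_EFin //; last 2 first.
- by move=> x _; apply: iint_ge0 => v; exact: f0.
- exact: mes_outer.
apply: eq_integral => x _; apply: IH => //; exact: mes_section.
Qed.

Lemma iint_le n (f g : 'cV[R]_n -> \bar R) : (forall x, 0 <= f x) -> (forall x, f x <= g x) ->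
  mes f -> mes g -> iint f <= iint g.
Proof.
elim: n f g => [|n IH] f g f0 fg mf mg //=.
have g0 : forall x, 0 <= g x by move=> x; apply: le_trans (fg x).
apply: ge0_le_integral => //.
- by move=> x _; apply: iint_ge0 => v; exact: f0.
- exact: mes_outer.
- exact: mes_outer.
by move=> x _; apply: IH => //; exact: mes_section.
Qed.


Lemma iint0 n : iint (fun _ : 'cV[R]_n => 0) = 0.
Proof. elim: n => [|n IH] //=. by apply: integral0_eq => x _; exact: IH. Qed.

Definition mesR n (f : 'cV[R]_n -> R) :=
  measurable_fun [set: n.-tuple R] (fun t => f (tcol t)).

Definition pp (r : R) := Num.max r 0%R.
Definition nn (r : R) := Num.max (- r)%R 0%R.

Lemma posE n (f : 'cV[R]_n -> R) x : (fun y => (f y)%:E)^\+ x = (pp (f x))%:E.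
Proof. by rewrite funeposE /pp EFin_max. Qed.
Lemma negE n (f : 'cV[R]_n -> R) x : (fun y => (f y)%:E)^\- x = (nn (f x))%:E.
Proof. by rewrite funenegE /nn EFin_max. Qed.

Lemma pp_ge0 r : (0 <= pp r)%R. Proof. by rewrite /pp le_max lexx orbT. Qed.
Lemma nn_ge0 r : (0 <= nn r)%R. Proof. by rewrite /nn le_max lexx orbT. Qed.

Lemma mes_pp n (f : 'cV[R]_n -> R) : mesR f -> mes (fun x => (pp (f x))%:E).
Proof.
move=> mf; apply/measurable_EFinP.
exact: (measurable_funrpos mf).
Qed.
Lemma mes_nn n (f : 'cV[R]_n -> R) : mesR f -> mes (fun x => (nn (f x))%:E).
Proof.
move=> mf; apply/measurable_EFinP.
exact: (measurable_funrneg mf).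
Qed.

Lemma RintE n (f : 'cV[R]_n -> R) : Rn_int (fun x => (f x)%:E) =
  iint (fun x => (pp (f x))%:E) - iint (fun x => (nn (f x))%:E).
Proof.
have E1 : (fun x => (fun y => (f y)%:E)^\+ x) = (fun x => (pp (f x))%:E).
  by apply/funext => x; exact: posE.
have E2 : (fun x => (fun y => (f y)%:E)^\- x) = (fun x => (nn (f x))%:E).
  by apply/funext => x; exact: negE.
by rewrite /Rn_int E1 E2.
Qed.


Lemma le_pp r : (r <= pp r)%R. Proof. by rewrite /pp le_max lexx. Qed.
Lemma le_nn r : (- r <= nn r)%R. Proof. by rewrite /nn le_max lexx. Qed.
Lemma pp_le r z : (r <= z)%R -> (0 <= z)%R -> (pp r <= z)%R.
Proof. by move=> h1 h2; rewrite /pp ge_max h1 h2. Qed.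
Lemma nn_le r z : (- r <= z)%R -> (0 <= z)%R -> (nn r <= z)%R.
Proof. by move=> h1 h2; rewrite /nn ge_max h1 h2. Qed.
Lemma ppnn r : (pp r - nn r = r)%R.
Proof.
rewrite /pp /nn !maxEle; do 2 case: leP => ?; lra.
Qed.

Lemma Rint_fin n (f : 'cV[R]_n -> R) c : Rn_int (fun x => (f x)%:E) = c%:E ->
  exists cp cm, [/\ iint (fun x => (pp (f x))%:E) = cp%:E,
     iint (fun x => (nn (f x))%:E) = cm%:E & c = (cp - cm)%R].
Proof.
rewrite RintE => h.
have a0 : 0 <= iint (fun x => (pp (f x))%:E) by apply: iint_ge0 => x; rewrite lee_fin pp_ge0.
have b0 : 0 <= iint (fun x => (nn (f x))%:E) by apply: iint_ge0 => x; rewrite lee_fin nn_ge0.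
move: h a0 b0; case: (iint _) => [a| |]; case: (iint _) => [b| |] //= h _ _.
by exists a, b; split => //; case: h.
Qed.


Lemma mesRD n (f g : 'cV[R]_n -> R) : mesR f -> mesR g -> mesR (fun x => f x + g x)%R.
Proof. by move=> mf mg; apply: measurable_funD. Qed.

Lemma ppE0 n (f : 'cV[R]_n -> R) x : 0 <= (pp (f x))%:E.
Proof. by rewrite lee_fin pp_ge0. Qed.
Lemma nnE0 n (f : 'cV[R]_n -> R) x : 0 <= (nn (f x))%:E.
Proof. by rewrite lee_fin nn_ge0. Qed.

Lemma iintD3 n (f g h : 'cV[R]_n -> R) : mesR f -> mesR g -> mesR h ->
  iint (fun x => (f x + g x + h x)%:E) =
  iint (fun x => (f x)%:E) + iint (fun x => (g x)%:E) + iint (fun x => (h x)%:E).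
Abort.

Lemma RintD n (f g : 'cV[R]_n -> R) c : mesR f -> mesR g ->
  Rn_int (fun x => (g x)%:E) = c%:E ->
  Rn_int (fun x => (f x + g x)%:E) = Rn_int (fun x => (f x)%:E) + c%:E.
Proof.
move=> mf mg /Rint_fin [cp [cm [hp hm ->]]].
have mp := mesRD mf mg.
rewrite !RintE.
have ID (u v : 'cV[R]_n -> R) : (forall x, 0 <= u x)%R -> (forall x, 0 <= v x)%R ->
    mes (fun x => (u x)%:E) -> mes (fun x => (v x)%:E) ->
    iint (fun x => (u x + v x)%:E) = iint (fun x => (u x)%:E) + iint (fun x => (v x)%:E).
  by move=> u0 v0 mu mv; rewrite -iintD // => x; rewrite lee_fin.
have mesD (u v : 'cV[R]_n -> R) : mes (fun x => (u x)%:E) -> mes (fun x => (v x)%:E) ->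
    mes (fun x => (u x + v x)%:E).
  move=> mu mv; apply/measurable_EFinP; apply: measurable_funD.
  exact/measurable_EFinP. exact/measurable_EFinP.
have IL (u v : 'cV[R]_n -> R) : (forall x, 0 <= u x)%R -> (forall x, u x <= v x)%R ->
    mes (fun x => (u x)%:E) -> mes (fun x => (v x)%:E) ->
    iint (fun x => (u x)%:E) <= iint (fun x => (v x)%:E).
  move=> u0 uv mu mv; apply: iint_le => // x; by rewrite lee_fin.
have pf := mes_pp mf; have nf := mes_nn mf; have pg := mes_pp mg.
have ng := mes_nn mg; have pP := mes_pp mp; have nP := mes_nn mp.
have i1 : iint (fun x => (pp (f x + g x))%:E) <=
   iint (fun x => (pp (f x))%:E) + cp%:E.
  rewrite -hp -ID //; try (by move=> x; exact: pp_ge0); try exact: mesD.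
  apply: IL => //; [by move=> x; exact: pp_ge0| |exact: mesD].
  by move=> x; apply: pp_le; [apply: lerD; exact: le_pp|apply: addr_ge0; exact: pp_ge0].
have i2 : iint (fun x => (pp (f x))%:E) <=
   iint (fun x => (pp (f x + g x))%:E) + cm%:E.
  rewrite -hm -ID //; try (by move=> x; exact: pp_ge0); try (by move=> x; exact: nn_ge0); try exact: mesD.
  apply: IL => //; [by move=> x; exact: pp_ge0| |exact: mesD].
  move=> x; apply: pp_le; last by apply: addr_ge0; [exact: pp_ge0|exact: nn_ge0].
  have := le_pp (f x + g x)%R; have := le_nn (g x); lra.
have i3 : iint (fun x => (nn (f x + g x))%:E) <=
   iint (fun x => (nn (f x))%:E) + cm%:E.
  rewrite -hm -ID //; try (by move=> x; exact: nn_ge0); try exact: mesD.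
  apply: IL => //; [by move=> x; exact: nn_ge0| |exact: mesD].
  move=> x; apply: nn_le; last by apply: addr_ge0; exact: nn_ge0.
  have := le_nn (f x); have := le_nn (g x); lra.
have i4 : iint (fun x => (nn (f x))%:E) <=
   iint (fun x => (nn (f x + g x))%:E) + cp%:E.
  rewrite -hp -ID //; try (by move=> x; exact: pp_ge0); try (by move=> x; exact: nn_ge0); try exact: mesD.
  apply: IL => //; [by move=> x; exact: nn_ge0| |exact: mesD].
  move=> x; apply: nn_le; last by apply: addr_ge0; [exact: nn_ge0|exact: pp_ge0].
  have := le_nn (f x + g x)%R; have := le_pp (g x); lra.
have key : iint (fun x => (pp (f x + g x))%:E) + iint (fun x => (nn (f x))%:E) + cm%:E =
           iint (fun x => (nn (f x + g x))%:E) + iint (fun x => (pp (f x))%:E) + cp%:E.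
  rewrite -hp -hm -!ID //; try (by move=> x; exact: pp_ge0); try (by move=> x; exact: nn_ge0);
    try (by move=> x; apply: addr_ge0; [exact: pp_ge0|exact: nn_ge0]);
    try (by move=> x; apply: addr_ge0; [exact: nn_ge0|exact: pp_ge0]);
    try (by apply: mesD => //; exact: mesD).
  f_equal; apply/funext => x; congr EFin.
  have := ppnn (f x + g x)%R; have := ppnn (f x); have := ppnn (g x); lra.
have a0 := iint_ge0 (ppE0 (fun x => f x + g x)%R).
have b0 := iint_ge0 (nnE0 (fun x => f x + g x)%R).
have c0 := iint_ge0 (ppE0 f).
have d0 := iint_ge0 (nnE0 f).
move: i1 i2 i3 i4 key a0 b0 c0 d0.
case: (iint (fun x => (pp (f x + g x))%:E)) => [a| |];
case: (iint (fun x => (nn (f x + g x))%:E)) => [a'| |];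
case: (iint (fun x => (pp (f x))%:E)) => [b'| |];
case: (iint (fun x => (nn (f x))%:E)) => [b| |] //=.
rewrite !lee_fin => _ _ _ _ [] ? _ _ _ _; congr EFin; lra.
Qed.


Lemma ppZ a r : (0 <= a)%R -> pp (a * r) = (a * pp r)%R.
Proof. move=> a0; rewrite /pp !maxEle; do 2 case: leP => ?; nra. Qed.
Lemma nnZ a r : (0 <= a)%R -> nn (a * r) = (a * nn r)%R.
Proof. move=> a0; rewrite /nn !maxEle; do 2 case: leP => ?; nra. Qed.
Lemma ppZN a r : (a <= 0)%R -> pp (a * r) = (- a * nn r)%R.
Proof. move=> a0; rewrite /pp /nn !maxEle; do 2 case: leP => ?; nra. Qed.
Lemma nnZN a r : (a <= 0)%R -> nn (a * r) = (- a * pp r)%R.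
Proof. move=> a0; rewrite /pp /nn !maxEle; do 2 case: leP => ?; nra. Qed.

Lemma iintZR n (u : 'cV[R]_n -> R) a : (0 <= a)%R -> (forall x, 0 <= u x)%R ->
  mes (fun x => (u x)%:E) -> iint (fun x => (a * u x)%:E) = a%:E * iint (fun x => (u x)%:E).
Proof.
move=> a0 u0 mu; rewrite -iintZ //; try (move=> x; rewrite lee_fin).
Qed.

Lemma RintZ n (g : 'cV[R]_n -> R) c a : mesR g ->
  Rn_int (fun x => (g x)%:E) = c%:E ->
  Rn_int (fun x => (a * g x)%:E) = (a * c)%:E.
Proof.
move=> mg /Rint_fin [cp [cm [hp hm ->]]].
rewrite RintE.
have [a0|a0] := leP 0%R a.
  rewrite (_ : (fun x => (pp (a * g x))%:E) = (fun x => (a * pp (g x))%:E)); last first.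
    by apply/funext => x; rewrite ppZ.
  rewrite (_ : (fun x => (nn (a * g x))%:E) = (fun x => (a * nn (g x))%:E)); last first.
    by apply/funext => x; rewrite nnZ.
  rewrite !iintZR //; try exact: mes_pp; try exact: mes_nn;
    try (by move=> x; exact: pp_ge0); try (by move=> x; exact: nn_ge0).
  by rewrite hp hm /= mulrBr.
have a0' : (a <= 0)%R by exact: ltW.
have na0 : (0 <= - a)%R by rewrite oppr_ge0.
rewrite (_ : (fun x => (pp (a * g x))%:E) = (fun x => (- a * nn (g x))%:E)); last first.
  by apply/funext => x; rewrite ppZN.
rewrite (_ : (fun x => (nn (a * g x))%:E) = (fun x => (- a * pp (g x))%:E)); last first.
  by apply/funext => x; rewrite nnZN.
rewrite !iintZR //; try exact: mes_pp; try exact: mes_nn;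
  try (by move=> x; exact: pp_ge0); try (by move=> x; exact: nn_ge0).
rewrite hp hm /=; congr EFin; ring.
Qed.

Lemma Rint0 n : Rn_int (fun _ : 'cV[R]_n => 0%R%:E) = 0%R%:E.
Proof.
rewrite (RintE (fun _ => 0%R)) /pp /nn oppr0 maxxx iint0 /=; by rewrite ?subr0 ?sube0 ?oppe0 ?adde0.
Qed.

Lemma mesR_sum n (I : Type) (s : seq I) (G : I -> 'cV[R]_n -> R) :
  (forall i, mesR (G i)) -> mesR (fun x => \sum_(i <- s) G i x)%R.
Proof. move=> mG; exact: (@measurable_sum _ _ R setT I s (fun i t => G i (tcol t)) mG). Qed.

Lemma Rint_sum n (I : Type) (s : seq I) (G : I -> 'cV[R]_n -> R) (c : I -> R) :
  (forall i, mesR (G i)) -> (forall i, Rn_int (fun x => (G i x)%:E) = (c i)%:E) ->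
  Rn_int (fun x => (\sum_(i <- s) G i x)%:E) = (\sum_(i <- s) c i)%:E.
Proof.
move=> mG hG; elim: s => [|i s IH].
  rewrite big_nil (_ : (fun x => (\sum_(i <- [::]) G i x)%:E) = (fun _ => 0%R%:E)).
    exact: Rint0.
  by apply/funext => x; rewrite big_nil.
rewrite big_cons (_ : (fun x => (\sum_(j <- i :: s) G j x)%:E) =
   (fun x => (G i x + \sum_(j <- s) G j x)%R%:E)); last first.
  by apply/funext => x; rewrite big_cons.
rewrite (RintD (c := \sum_(j <- s) c j)) //; last exact: mesR_sum.
by rewrite hG.
Qed.

End Meas.
Section LA.
Variable R : realType.

Lemma det_rank1 n (u v : 'cV[R]_n) :
  \det (1%:M + u *m v^T) = 1 + (v^T *m u) 0 0.
Proof.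
pose A : 'M[R]_(n + 1) := block_mx 1%:M (- u) (v^T) 1%:M.
have E1 : A = block_mx 1%:M 0 (v^T) 1%:M *m block_mx 1%:M (- u) 0 (1%:M + v^T *m u).
  rewrite mulmx_block ?mulmx1 ?mul1mx ?mul0mx ?mulmx0 ?addr0 ?add0r ?mulmxN.
  by rewrite /A addrCA addNr addr0.
have E2 : A = block_mx (1%:M + u *m v^T) (- u) 0 1%:M *m block_mx 1%:M 0 (v^T) 1%:M.
  rewrite mulmx_block ?mulmx1 ?mul1mx ?mul0mx ?mulmx0 ?add0r ?addr0 ?mulNmx.
  by rewrite /A -addrA subrr addr0.
have := congr1 determinant E2; rewrite {1}E1 !det_mulmx.
rewrite (det_lblock (1%:M : 'M[R]_n)) (det_ublock (1%:M : 'M[R]_n)) det_ublock.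
rewrite !det1 !mul1r !mulr1 => <-.
by rewrite det_mx11 !mxE eqxx.
Qed.


Definition dot n (u v : 'cV[R]_n) : R := (u^T *m v) 0 0.
Definition Pm n (u : 'cV[R]_n) : 'M[R]_n := u *m u^T.
Definition orthon n k (e : 'I_k -> 'cV[R]_n) := forall t u, dot (e t) (e u) = (t == u)%:R.
Definition Lmx n k (a : 'I_k -> R) (e : 'I_k -> 'cV[R]_n) : 'M[R]_n :=
  1%:M + \sum_t a t *: Pm (e t).

Lemma dotE n (u v : 'cV[R]_n) : dot u v = \sum_i u i 0 * v i 0.
Proof. by rewrite /dot mxE; apply: eq_bigr => i _; rewrite mxE. Qed.

Lemma dotC n (u v : 'cV[R]_n) : dot u v = dot v u.
Proof. by rewrite !dotE; apply: eq_bigr => i _; rewrite mulrC. Qed.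

Lemma trmx_dot n (u v : 'cV[R]_n) : u^T *m v = (dot u v)%:M.
Proof. exact: mx11_scalar. Qed.

Lemma PmM n (u v : 'cV[R]_n) : Pm u *m Pm v = dot u v *: (u *m v^T).
Proof.
by rewrite /Pm mulmxA -(mulmxA u) trmx_dot mul_mx_scalar -scalemxAl.
Qed.

Lemma Pm_orth n k (e : 'I_k -> 'cV[R]_n) t u : orthon e ->
  Pm (e t) *m Pm (e u) = (t == u)%:R *: Pm (e t).
Proof.
move=> oe; rewrite PmM oe; case: eqP => [->|_]; first by [].
by rewrite !scale0r.
Qed.

Lemma Lmx_mul n k (a b : 'I_k -> R) (e : 'I_k -> 'cV[R]_n) : orthon e ->
  Lmx a e *m Lmx b e = Lmx (fun t => a t + b t + a t * b t) e.
Proof.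
move=> oe; rewrite /Lmx mulmxDl !mulmxDr !mul1mx mulmx1.
have -> : (\sum_t a t *: Pm (e t)) *m (\sum_t b t *: Pm (e t)) =
    \sum_t (a t * b t) *: Pm (e t).
  rewrite mulmx_suml; apply: eq_bigr => t _.
  rewrite mulmx_sumr (bigD1 t) //= big1 ?addr0.
    by rewrite -scalemxAl -scalemxAr Pm_orth // eqxx scale1r scalerA.
  move=> u /negbTE tu; rewrite -scalemxAl -scalemxAr Pm_orth // eq_sym tu.
  by rewrite !scale0r !scaler0.
rewrite -!addrA; congr (_ + _); rewrite addrA -!big_split /=.
by apply: eq_bigr => t _; rewrite !scalerDl (addrC (b t *: _)).
Qed.

Lemma Lmx0 n k (e : 'I_k -> 'cV[R]_n) : Lmx (fun _ => 0) e = 1%:M.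
Proof. by rewrite /Lmx big1 ?addr0 // => t _; rewrite scale0r. Qed.

Lemma Lmx_inv n k (a b : 'I_k -> R) (e : 'I_k -> 'cV[R]_n) : orthon e ->
  (forall t, a t + b t + a t * b t = 0) -> invmx (Lmx a e) = Lmx b e.
Proof.
move=> oe hab.
have h : Lmx a e *m Lmx b e = 1%:M.
  rewrite Lmx_mul // -(Lmx0 e); congr Lmx; apply/funext => t; exact: hab.
have [ua _] := mulmx1_unit h.
by rewrite -[RHS]mul1mx -(mulVmx ua) -mulmxA h mulmx1.
Qed.


Lemma orthon_widen n k (e : 'I_k.+1 -> 'cV[R]_n) : orthon e ->
  orthon (fun t : 'I_k => e (widen_ord (leqnSn k) t)).
Proof. by move=> oe t u; rewrite oe. Qed.

Lemma Lmx_det n k (a : 'I_k -> R) (e : 'I_k -> 'cV[R]_n) : orthon e ->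
  \det (Lmx a e) = \prod_t (1 + a t).
Proof.
elim: k a e => [|k IH] a e oe.
  by rewrite /Lmx big_ord0 addr0 det1 big_ord0.
pose b' := fun t : 'I_k.+1 => if t == ord_max then 0 else a t.
pose b := fun t : 'I_k.+1 => if t == ord_max then a t else 0.
have -> : Lmx a e = Lmx b' e *m Lmx b e.
  rewrite Lmx_mul //; congr Lmx; apply/funext => t; rewrite /b /b'.
  by case: eqP => _; rewrite ?mul0r ?mulr0 ?addr0 ?add0r.
rewrite det_mulmx.
have -> : Lmx b' e = Lmx (fun t : 'I_k => a (widen_ord (leqnSn k) t))
                         (fun t : 'I_k => e (widen_ord (leqnSn k) t)).
  rewrite /Lmx big_ord_recr /= {2}/b' eqxx scale0r addr0; congr (_ + _).
  apply: eq_bigr => t _; rewrite /b' ifF //.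
  by apply/negbTE; rewrite neq_ltn /= ltn_ord.
rewrite IH; last exact: orthon_widen.
have -> : Lmx b e = 1%:M + (a ord_max *: e ord_max) *m (e ord_max)^T.
  rewrite /Lmx big_ord_recr /= big1 ?add0r.
    by rewrite /b eqxx -scalemxAl.
  move=> t _; rewrite /b ifF ?scale0r //.
  by apply/negbTE; rewrite neq_ltn /= ltn_ord.
rewrite det_rank1 -scalemxAr mxE -/(dot _ _) oe eqxx mulr1.
by rewrite big_ord_recr.
Qed.


Definition quad n (M : 'M[R]_n) (u : 'cV[R]_n) : R := (u^T *m M *m u) 0 0.
Definition bil n (B M : 'M[R]_n) : R := \sum_i \sum_j B i j * M i j.

Lemma quadE n (M : 'M[R]_n) u : quad M u = \sum_i \sum_j u i 0 * M i j * u j 0.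
Proof.
rewrite /quad mxE exchange_big /=; apply: eq_bigr => i _.
rewrite mxE mulr_suml; apply: eq_bigr => j _; by rewrite !mxE.
Qed.

Lemma quad_dot n (M : 'M[R]_n) u : quad M u = dot u (M *m u).
Proof. by rewrite /quad /dot mulmxA. Qed.

Lemma bilD n (B C M : 'M[R]_n) : bil (B + C) M = bil B M + bil C M.
Proof.
rewrite /bil -big_split; apply: eq_bigr => i _; rewrite -big_split.
by apply: eq_bigr => j _; rewrite mxE mulrDl.
Qed.

Lemma bil0 n (M : 'M[R]_n) : bil 0 M = 0.
Proof. by rewrite /bil big1 // => i _; rewrite big1 // => j _; rewrite mxE mul0r. Qed.

Lemma bilZ n a (B M : 'M[R]_n) : bil (a *: B) M = a * bil B M.
Proof.
rewrite /bil mulr_sumr; apply: eq_bigr => i _; rewrite mulr_sumr.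
by apply: eq_bigr => j _; rewrite mxE mulrA.
Qed.

Lemma bilN n (B M : 'M[R]_n) : bil (- B) M = - bil B M.
Proof. by rewrite -scaleN1r bilZ mulN1r. Qed.

Lemma bil_sum n (I : Type) (s : seq I) (F : I -> 'M[R]_n) M :
  bil (\sum_(i <- s) F i) M = \sum_(i <- s) bil (F i) M.
Proof. by rewrite (big_morph (fun B => bil B M) (fun B C => bilD B C M) (bil0 M)). Qed.

Lemma bilP n (u : 'cV[R]_n) M : bil (Pm u) M = quad M u.
Proof.
rewrite quadE /bil; apply: eq_bigr => i _; apply: eq_bigr => j _.
rewrite !mxE big_ord1 !mxE; ring.
Qed.

Lemma bil_Lmx n k (a : 'I_k -> R) (e : 'I_k -> 'cV[R]_n) M :
  bil (Lmx a e) M = bil 1%:M M + \sum_t a t * quad M (e t).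
Proof.
rewrite /Lmx bilD bil_sum; congr (_ + _); apply: eq_bigr => t _.
by rewrite bilZ bilP.
Qed.


Lemma ln_le_sub1 (y : R) : 0 < y -> ln y <= y - 1.
Proof.
move=> y0; have := @le_ln1Dx R (y - 1); rewrite addrCA subrr addr0.
apply; lra.
Qed.

Lemma lnMV (x y : R) : 0 < x -> 0 < y -> ln (x / y) = ln x - ln y.
Proof.
move=> x0 y0; rewrite lnM ?lnV //; rewrite ?posrE ?invr_gt0 //.
Qed.

Lemma key1 (al mu : R) : 0 < al -> 0 < mu ->
  ell mu <= ln al + (al^-1 - 1) * mu.
Proof.
move=> a0 m0; have := ln_le_sub1 (divr_gt0 m0 a0).
rewrite lnMV // /ell => h.
have -> : (al^-1 - 1) * mu = mu / al - mu by rewrite mulrBl mul1r mulrC.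
lra.
Qed.

Lemma jensen_ell (I : finType) (p x : I -> R) :
  (forall j, 0 <= p j) -> \sum_j p j = 1 -> (forall j, 0 < x j) ->
  \sum_j p j * ell (x j) <= ell (\sum_j p j * x j).
Proof.
move=> p0 p1 x0.
set X := \sum_j p j * x j.
have X0 : 0 < X.
  rewrite lt_def sumr_ge0 ?andbT; last by move=> j _; apply: mulr_ge0 => //; exact: ltW.
  apply/negP => /eqP h.
  have h2 := psumr_eq0P (fun j _ => mulr_ge0 (p0 j) (ltW (x0 j))) h.
  move: p1; rewrite big1 => [/eqP|j _]; first by rewrite eq_sym oner_eq0.
  by have /eqP := h2 j isT; rewrite mulf_eq0 (gt_eqF (x0 j)) orbF => /eqP.
have step j : p j * ell (x j) <= p j * (ln X + x j / X - 1) - p j * x j + p j.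
  have := ln_le_sub1 (divr_gt0 (x0 j) X0); rewrite lnMV // => h.
  rewrite /ell; have := p0 j; nra.
apply: le_trans (ler_sum _ (fun j _ => step j)) _.
rewrite big_split /= sumrB.
have -> : \sum_j p j * (ln X + x j / X - 1) = ln X + X / X - 1.
  rewrite (eq_bigr (fun j => p j * ln X + (p j * x j) / X - p j)); last first.
    by move=> j _; rewrite !mulrDr mulrN1 mulrA.
  rewrite sumrB big_split /= -!mulr_suml p1 mul1r.
  by rewrite -/X.
rewrite -/X p1 divff ?gt_eqF // /ell; lra.
Qed.

Lemma lp_lemma n k (L w : 'I_n -> R) (hk1 : (1 <= k)%N) (hkn : (k <= n)%N) :
  (forall i j : 'I_n, (i <= j)%N -> L i <= L j) ->
  (forall j, 0 <= w j) -> (forall j, w j <= 1) -> \sum_j w j = k%:R ->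
  \sum_(j < n | (j < k)%N) L j <= \sum_j w j * L j.
Proof.
move=> Lmono w0 w1 ws.
have hk : (k.-1 < n)%N by lia.
set T := L (Ordinal hk).
pose ind (j : 'I_n) : R := if (j < k)%N then 1 else 0.
have E1 : \sum_(j < n | (j < k)%N) L j = \sum_j ind j * L j.
  rewrite big_mkcond /=; apply: eq_bigr => j _; rewrite /ind.
  by case: ifP; rewrite ?mul1r ?mul0r.
have E2 : \sum_j ind j = k%:R.
  by rewrite /ind -big_mkcond /= (big_ord_narrow hkn) /= sumr_const card_ord.
rewrite E1 -subr_ge0 -sumrB.
have step j : (w j - ind j) * T <= w j * L j - ind j * L j.
  rewrite /ind; case: ifP => hj.
  - have : L j <= T by apply: Lmono => /=; lia.
    have := w1 j; nra.
  - have : T <= L j.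
      by apply: Lmono => /=; move: hj; lia.
    have := w0 j; nra.
apply: le_trans (ler_sum _ (fun j _ => step j)).
by rewrite -mulr_suml sumrB ws E2 subrr mul0r.
Qed.


Lemma dot_sumr n (I : Type) (s : seq I) (u : 'cV[R]_n) (a : I -> R) (w : I -> 'cV[R]_n) :
  dot u (\sum_(j <- s) a j *: w j) = \sum_(j <- s) a j * dot u (w j).
Proof.
rewrite dotE.
under eq_bigr do rewrite summxE mulr_sumr.
rewrite exchange_big /=; apply: eq_bigr => j _.
rewrite dotE mulr_sumr; apply: eq_bigr => i _; rewrite !mxE; ring.
Qed.

Lemma dotBl n (u v w : 'cV[R]_n) : dot (u - v) w = dot u w - dot v w.
Proof. by rewrite !dotE -sumrB; apply: eq_bigr => i _; rewrite !mxE mulrBl. Qed.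
Lemma dotBr n (u v w : 'cV[R]_n) : dot w (u - v) = dot w u - dot w v.
Proof. by rewrite !dotE -sumrB; apply: eq_bigr => i _; rewrite !mxE mulrBr. Qed.
Lemma dot_ge0 n (u : 'cV[R]_n) : 0 <= dot u u.
Proof. by rewrite dotE sumr_ge0 // => i _; rewrite -expr2 sqr_ge0. Qed.

Lemma basis_expand n (d : 'I_n -> 'cV[R]_n) : orthon d ->
  forall v, v = \sum_j dot (d j) v *: d j.
Proof.
move=> od v.
pose D : 'M[R]_n := \matrix_(i, j) d j i 0.
have h1 : D^T *m D = 1%:M.
  apply/matrixP => i j; rewrite !mxE -od dotE; apply: eq_bigr => l _; by rewrite !mxE.
have h2 := mulmx1C h1.
apply/matrixP => b c; rewrite (ord1 c).
have := congr1 (fun M => (M *m v) b 0) h2; rewrite mul1mx => <-.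
rewrite -mulmxA mxE summxE; apply: eq_bigr => j _.
rewrite !mxE dotE mulrC; congr (_ * _); apply: eq_bigr => l _; by rewrite !mxE.
Qed.

Lemma mainC n k (Sig : 'M[R]_n) (lam : 'I_n -> R) (d : 'I_n -> 'cV[R]_n)
  (al : 'I_k -> R) (e : 'I_k -> 'cV[R]_n) :
  orthon d -> (forall j, Sig *m d j = lam j *: d j) -> (forall j, 0 < lam j) ->
  (forall i j : 'I_n, (i <= j)%N -> ell (lam i) <= ell (lam j)) ->
  (1 <= k)%N -> (k <= n)%N ->
  orthon e -> (forall t, 0 < al t) -> (forall t, 0 < quad Sig (e t)) ->
  \sum_(j < n | (j < k)%N) ell (lam j) <=
  \sum_t (ln (al t) + ((al t)^-1 - 1) * quad Sig (e t)).
Proof.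
move=> od heig lpos hord hk1 hkn oe apos mpos.
pose c t j := dot (d j) (e t).
have exp_e t : e t = \sum_j c t j *: d j by exact: basis_expand.
have F1 t : \sum_j c t j ^+ 2 = 1.
  have := oe t t; rewrite eqxx mulr1n {2}(exp_e t) dot_sumr => <-.
  by apply: eq_bigr => j _; rewrite expr2 dotC.
have F2 t : quad Sig (e t) = \sum_j c t j ^+ 2 * lam j.
  rewrite quad_dot {2}(exp_e t) mulmx_sumr.
  rewrite (eq_bigr (fun j => (c t j * lam j) *: d j)); last first.
    by move=> j _; rewrite -scalemxAr heig scalerA.
  rewrite dot_sumr; apply: eq_bigr => j _; rewrite dotC -/(c t j); ring.
have F3 j : \sum_t c t j ^+ 2 <= 1.
  have := dot_ge0 (d j - \sum_t c t j *: e t).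
  rewrite dotBl !dotBr !dot_sumr od eqxx.
  have -> : \sum_t c t j * dot (\sum_t0 c t0 j *: e t0) (e t) = \sum_t c t j ^+ 2.
    apply: eq_bigr => t _; rewrite dotC dot_sumr (bigD1 t) //= big1 ?addr0.
      by rewrite oe eqxx mulr1 expr2.
    by move=> u /negbTE tu; rewrite oe eq_sym tu mulr0.
  have -> : \sum_t c t j * dot (d j) (e t) = \sum_t c t j ^+ 2.
    by apply: eq_bigr => t _; rewrite expr2.
  have -> : dot (\sum_t c t j *: e t) (d j) = \sum_t c t j ^+ 2.
    by rewrite dotC dot_sumr; apply: eq_bigr => t _; rewrite expr2.
  rewrite mulr1n; lra.
apply: le_trans (ler_sum _ (fun t _ => key1 (apos t) (mpos t))).
have J t : \sum_j c t j ^+ 2 * ell (lam j) <= ell (quad Sig (e t)).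
  rewrite F2; apply: jensen_ell => //; first by move=> j; exact: sqr_ge0.
apply: le_trans (ler_sum _ (fun t _ => J t)).
rewrite exchange_big /=.
rewrite [X in _ <= X](eq_bigr (fun j => (\sum_t c t j ^+ 2) * ell (lam j))); last first.
  by move=> j _; rewrite mulr_suml.
apply: lp_lemma => //.
- by move=> j; apply: sumr_ge0 => t _; exact: sqr_ge0.
- rewrite exchange_big /= (eq_bigr (fun _ => 1)); last by move=> t _; exact: F1.
  by rewrite sumr_const card_ord.
Qed.

End LA.

Section P3.
Variable R : realType.

Lemma mesR_cst n (c : R) : mesR (fun _ : 'cV[R]_n => c).
Proof. exact: measurable_cst. Qed.

Lemma mesR_coord n (i : 'I_n) : mesR (fun x : 'cV[R]_n => x i 0).
Proof.
rewrite /mesR (_ : (fun t => tcol t i 0) = (fun t => tnth t i)).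
  exact: measurable_tnth.
by apply/funext => t; rewrite /tcol mxE.
Qed.

Lemma mesR_M n (f g : 'cV[R]_n -> R) : mesR f -> mesR g -> mesR (fun x => f x * g x).
Proof. by move=> mf mg; apply: measurable_funM. Qed.

Lemma mesR_B n (f g : 'cV[R]_n -> R) : mesR f -> mesR g -> mesR (fun x => f x - g x).
Proof. by move=> mf mg; apply: measurable_funB. Qed.

Lemma mesR_ln n (f : 'cV[R]_n -> R) : mesR f -> mesR (fun x => ln (f x)).
Proof. by move=> mf; apply: measurableT_comp mf; exact: measurable_ln. Qed.

Lemma mesR_exp n (f : 'cV[R]_n -> R) : mesR f -> mesR (fun x => expR (f x)).
Proof. by move=> mf; apply: measurableT_comp mf; exact: measurable_expR. Qed.

Lemma quad_sub n (M : 'M[R]_n) (x m : 'cV[R]_n) :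
  quad M (x - m) = \sum_i \sum_j (x i 0 - m i 0) * M i j * (x j 0 - m j 0).
Proof. by rewrite quadE; apply: eq_bigr => i _; apply: eq_bigr => j _; rewrite !mxE. Qed.

Lemma mesR_quad n (M : 'M[R]_n) (m : 'cV[R]_n) : mesR (fun x => quad M (x - m)).
Proof.
rewrite (_ : (fun x => quad M (x - m)) = (fun x =>
   \sum_i \sum_j (x i 0 - m i 0) * M i j * (x j 0 - m j 0))); last first.
  by apply/funext => x; rewrite quad_sub.
apply: mesR_sum => i; apply: mesR_sum => j.
apply: mesR_M; [apply: mesR_M|]; try exact: mesR_cst;
apply: mesR_B; (exact: mesR_coord || exact: mesR_cst).
Qed.

Lemma mesR_gauss n (m : 'cV[R]_n) (A : 'M[R]_n) : mesR (gauss m A).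
Proof.
rewrite /gauss; apply: mesR_M; first exact: mesR_cst.
apply: mesR_exp; apply: mesR_M; last exact: mesR_cst.
rewrite (_ : (fun x => - ((x - m)^T *m invmx A *m (x - m)) 0 0) =
   (fun x => 0 - quad (invmx A) (x - m))).
  by apply: mesR_B; [exact: mesR_cst|exact: mesR_quad].
by apply/funext => t; rewrite sub0r.
Qed.


Definition cst n (A : 'M[R]_n) : R := ln (Num.sqrt ((2 * pi) ^+ n * \det A)).

Lemma sq_pos n (A : 'M[R]_n) : 0 < \det A -> 0 < Num.sqrt ((2 * pi) ^+ n * \det A).
Proof.
move=> hA; rewrite sqrtr_gt0 mulr_gt0 // exprn_gt0 // mulr_gt0 //; exact: pi_gt0.
Qed.

Lemma gauss_pos n (m : 'cV[R]_n) A x : 0 < \det A -> 0 < gauss m A x.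
Proof. by move=> hA; rewrite /gauss mulr_gt0 ?expR_gt0 // invr_gt0 sq_pos. Qed.

Lemma ln_gauss n (m : 'cV[R]_n) A x : 0 < \det A ->
  ln (gauss m A x) = - cst A - quad (invmx A) (x - m) / 2.
Proof.
move=> hA; rewrite /gauss lnM ?posrE ?invr_gt0 ?sq_pos ?expR_gt0 //.
by rewrite lnV ?posrE ?sq_pos // expRK /cst /quad mulNr.
Qed.

Lemma PW n (m : 'cV[R]_n) A x (g : R) : 0 < \det A -> 0 <= g ->
  ln (g / gauss m A x) * g = (ln g + cst A + quad (invmx A) (x - m) / 2) * g.
Proof.
move=> hA; rewrite le_eqVlt => /orP [/eqP <-|g0]; first by rewrite !mulr0.
rewrite lnMV ?gauss_pos // ln_gauss //; ring.
Qed.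

Lemma ln_sqrt (y : R) : 0 < y -> ln (Num.sqrt y) = ln y / 2.
Proof.
move=> y0; rewrite -{2}(sqr_sqrtr (ltW y0)) lnXn ?sqrtr_gt0 //.
lra.
Qed.

Lemma ln_prod (I : finType) (F : I -> R) : (forall i, 0 < F i) ->
  ln (\prod_i F i) = \sum_i ln (F i).
Proof.
move=> F0.
apply: (proj2 (big_rec2 (fun x y => 0 < x /\ ln x = y) _ _)).
  by split; [exact: ltr01|exact: ln1].
move=> i x y _ [x0 <-]; split; first by rewrite mulr_gt0.
by rewrite lnM ?posrE.
Qed.


Lemma KL_shift n (phi : 'cV[R]_n -> R) (phi_ge0 : forall x, 0 <= phi x)
  (phi_meas : mesR phi) (E : R) (E_pos : 0 < E)
  (hE : Rn_int (fun x => (phi x * gauss 0 1%:M x)%:E) = E%:E)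
  (mstar : 'cV[R]_n) (Sstar : 'M[R]_n)
  (hS : forall i j,
      Rn_int (fun x => ((x i 0 - mstar i 0) * (x j 0 - mstar j 0)
                        * (phi x * gauss 0 1%:M x / E))%:E)
      = (Sstar i j)%:E)
  (A B : 'M[R]_n) : 0 < \det A -> 0 < \det B ->
  KL (fun x => phi x * gauss 0 1%:M x / E) (gauss mstar B) =
  (KL (fun x => (phi x * gauss 0 1%:M x / E)%R) (gauss mstar A) +
   (cst B - cst A + bil (invmx B - invmx A) Sstar / 2)%:E)%E.
Proof.
move=> hA hB.
set gs := fun x => phi x * gauss 0 1%:M x / E.
have det1 : 0 < \det (1%:M : 'M[R]_n) by rewrite det1 ltr01.
have gs0 x : 0 <= gs x.
  by rewrite /gs divr_ge0 ?(ltW E_pos) // mulr_ge0 // ltW // gauss_pos.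
have mpg : mesR (fun x => phi x * gauss 0 1%:M x) by apply: mesR_M => //; exact: mesR_gauss.
have mgs : mesR gs by apply: mesR_M => //; exact: mesR_cst.
set H := fun (i j : 'I_n) (x : 'cV[R]_n) => (x i 0 - mstar i 0) * (x j 0 - mstar j 0) * gs x.
have mH i j : mesR (H i j).
  apply: mesR_M => //; apply: mesR_M; apply: mesR_B; (exact: mesR_coord || exact: mesR_cst).
set Bm := invmx B - invmx A.
set Fk := fun x : 'cV[R]_n => (ln (gs x) + cst A + quad (invmx A) (x - mstar) / 2) * gs x.
set G := fun x : 'cV[R]_n => (cst B - cst A) * gs x + \sum_i \sum_j (Bm i j / 2) * H i j x.
have mFk : mesR Fk.
  apply: mesR_M => //; apply: mesRD; [apply: mesRD|].
  - exact: mesR_ln.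
  - exact: mesR_cst.
  - apply: mesR_M; [exact: mesR_quad|exact: mesR_cst].
have mG : mesR G.
  apply: mesRD; first by apply: mesR_M => //; exact: mesR_cst.
  apply: mesR_sum => i; apply: mesR_sum => j; apply: mesR_M => //; exact: mesR_cst.
have Igs : Rn_int (fun x => (gs x)%:E) = 1%:E.
  rewrite (_ : (fun x => (gs x)%:E) = (fun x => (E^-1 * (phi x * gauss 0 1%:M x))%:E)).
    by rewrite (RintZ _ mpg hE) mulVf ?gt_eqF.
  by apply/funext => x; rewrite /gs mulrC.
have IG : Rn_int (fun x => (G x)%:E) = (cst B - cst A + bil Bm Sstar / 2)%:E.
  rewrite /G (RintD (c := \sum_i \sum_j (Bm i j / 2) * Sstar i j)).
  - rewrite (RintZ _ mgs Igs) /=; congr EFin; rewrite mulr1; congr (_ + _).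
    rewrite /bil !mulr_suml; apply: eq_bigr => i _; rewrite mulr_suml.
    by apply: eq_bigr => j _; ring.
  - by apply: mesR_M => //; exact: mesR_cst.
  - by apply: mesR_sum => i; apply: mesR_sum => j; apply: mesR_M => //; exact: mesR_cst.
  - apply: Rint_sum => i.
      by apply: mesR_sum => j; apply: mesR_M => //; exact: mesR_cst.
    apply: Rint_sum => j; first by apply: mesR_M => //; exact: mesR_cst.
    exact: RintZ (mH i j) (hS i j).
have eqB : (fun x => (ln (gs x / gauss mstar B x) * gs x)%:E) = (fun x => (Fk x + G x)%:E).
  apply/funext => x; rewrite PW //; congr EFin; rewrite /Fk /G.
  have -> : \sum_i \sum_j (Bm i j / 2) * H i j x =
      (quad (invmx B) (x - mstar) - quad (invmx A) (x - mstar)) / 2 * gs x.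
    rewrite !quad_sub -sumrB !mulr_suml; apply: eq_bigr => i _.
    rewrite -sumrB !mulr_suml; apply: eq_bigr => j _.
    by rewrite /Bm /H !mxE; ring.
  ring.
have eqA : (fun x => (ln (gs x / gauss mstar A x) * gs x)%:E) = (fun x => (Fk x)%:E).
  by apply/funext => x; rewrite PW.
by rewrite /KL -/gs eqB (RintD mFk mG IG) eqA.
Qed.


Lemma dotZl n a (u v : 'cV[R]_n) : dot (a *: u) v = a * dot u v.
Proof. by rewrite !dotE mulr_sumr; apply: eq_bigr => i _; rewrite !mxE mulrA. Qed.
Lemma dotZr n a (u v : 'cV[R]_n) : dot u (a *: v) = a * dot u v.
Proof. by rewrite dotC dotZl dotC. Qed.

Lemma dot_nz n (u : 'cV[R]_n) : dot u u = 1 -> u != 0.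
Proof.
move=> h; apply/eqP => u0; move: h; rewrite u0 dotE big1 => [/eqP|i _].
  by rewrite eq_sym oner_eq0.
by rewrite mxE mul0r.
Qed.

Lemma dot_pos n (u : 'cV[R]_n) : u != 0 -> 0 < dot u u.
Proof.
move=> un; rewrite lt_def dot_ge0 andbT; apply/negP => /eqP h.
move: un; rewrite dotE in h.
have h2 := psumr_eq0P (fun i _ => sqr_ge0 (u i 0)) (etrans (eq_bigr _ (fun i _ => esym (expr2 (u i 0)))) h).
suff -> : u = 0 by rewrite eqxx.
apply/matrixP => i j; rewrite (ord1 j) mxE.
by have /eqP := h2 i isT; rewrite sqrf_eq0 => /eqP.
Qed.

Lemma Lmx_props n k (al : 'I_k -> R) (e : 'I_k -> 'cV[R]_n) : orthon e ->
  (forall t, 0 < al t) ->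
  [/\ \det (Lmx (fun t => al t - 1) e) = \prod_t al t,
      0 < \det (Lmx (fun t => al t - 1) e) &
      invmx (Lmx (fun t => al t - 1) e) = Lmx (fun t => (al t)^-1 - 1) e].
Proof.
move=> oe apos.
have hd : \det (Lmx (fun t => al t - 1) e) = \prod_t al t.
  by rewrite Lmx_det //; apply: eq_bigr => t _; rewrite addrC subrK.
split => //; first by rewrite hd; apply: prodr_gt0 => t _.
apply: Lmx_inv => // t; have := apos t => a0.
by field; rewrite gt_eqF.
Qed.

Lemma cst_Lmx n k (al : 'I_k -> R) (e : 'I_k -> 'cV[R]_n) : orthon e ->
  (forall t, 0 < al t) ->
  cst (Lmx (fun t => al t - 1) e) = (ln ((2 * pi) ^+ n) + \sum_t ln (al t)) / 2.
Proof.
move=> oe apos; have [hd hp _] := Lmx_props oe apos.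
have p0 : 0 < (2 * pi) ^+ n :> R by rewrite exprn_gt0 // mulr_gt0 //; exact: pi_gt0.
rewrite /cst ln_sqrt ?mulr_gt0 // lnM ?posrE // hd ln_prod //.
Qed.

End P3.

Unset Implicit Arguments.
Local Close Scope classical_set_scope.

Theorem theorem1 (R : realType) (n : nat) (hn : (0 < n)%N)
  (phi : 'cV[R]_n -> R) (phi_ge0 : forall x, 0 <= phi x)
  (phi_meas : Rn_measurable phi)
  (E : R) (E_pos : 0 < E)
  (hE : Rn_int (fun x => (phi x * gauss 0 1%:M x)%:E) = E%:E)
  (mstar : 'cV[R]_n) (Sstar : 'M[R]_n)
  (hm : forall i, Rn_int (fun x => (x i 0 * (phi x * gauss 0 1%:M x / E))%:E)
                  = (mstar i 0)%:E)
  (hS : forall i j,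
      Rn_int (fun x => ((x i 0 - mstar i 0) * (x j 0 - mstar j 0)
                        * (phi x * gauss 0 1%:M x / E))%:E)
      = (Sstar i j)%:E)
  (hSpd : forall v : 'cV[R]_n, v != 0 -> 0 < (v^T *m Sstar *m v) 0 0)
  (lam : 'I_n -> R) (d : 'I_n -> 'cV[R]_n)
  (heig : forall i, Sstar *m d i = lam i *: d i)
  (horth : forall i j, (d i)^T *m d j = (i == j)%:R%:M)
  (hord : forall i j : 'I_n, (i <= j)%N -> ell (lam i) <= ell (lam j))
  (k : nat) (hk1 : (1 <= k)%N) (hkn : (k <= n)%N) :
  let gstar := fun x => phi x * gauss 0 1%:M x / E in
  let Sk := 1%:M + \sum_(i < n | (i < k)%N) (lam i - 1) *: (d i *m (d i)^T) in
  Lnk k Sk /\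
  (forall S : 'M[R]_n, Lnk k S ->
     (KL gstar (gauss mstar Sk) <= KL gstar (gauss mstar S))%E).
Proof.
move=> gstar Sk.
have od : orthon d by move=> i j; rewrite /dot horth mxE eqxx mulr1n.
have dnz j : d j != 0 by apply: dot_nz; rewrite od eqxx.
have quadd j : quad Sstar (d j) = lam j.
  by rewrite quad_dot heig dotZr od eqxx mulr1.
have lpos j : 0 < lam j by rewrite -quadd; exact: hSpd.
pose w := widen_ord hkn.
have odw : orthon (fun t => d (w t)) by move=> t u; rewrite od.
have Sk_eq : Sk = Lmx (fun t => lam (w t) - 1) (fun t => d (w t)).
  by rewrite /Sk /Lmx (big_ord_narrow hkn).
split.
  exists (fun t => lam (w t)), (fun t => d (w t)); split => //.
  - move=> i j ij; rewrite horth.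
    have -> : (w i == w j) = false by apply/negbTE.
    by apply/matrixP => a b; rewrite !mxE mul0rn.
  - rewrite Sk_eq /Lmx addrC; congr (_ + _); apply: eq_bigr => t _.
    by rewrite /sqnorm horth mxE eqxx mulr1n divr1.
move=> S [al [d' [apos d'nz d'orth ->]]].
pose sq t := sqnorm (d' t).
have sqpos t : 0 < sq t by exact: dot_pos.
pose e t := (Num.sqrt (sq t))^-1 *: d' t.
have oe : orthon e.
  move=> t u; rewrite /e dotZl dotZr.
  case: eqP => [<-|tu].
    rewrite -/(sqnorm _) -/(sq t) mulrA -expr2 exprVn sqr_sqrtr ?ltW //.
    by rewrite mulVf ?gt_eqF.
  have := d'orth t u; rewrite (introN eqP tu) => /(_ isT) h.
  by rewrite /dot h mxE !mulr0.
have S_eq : \sum_t ((al t - 1) / sqnorm (d' t)) *: (d' t *m (d' t)^T) + 1%:M =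
    Lmx (fun t => al t - 1) e.
  rewrite /Lmx addrC; congr (_ + _); apply: eq_bigr => t _.
  rewrite /Pm /e linearZ /= -scalemxAl -scalemxAr scalerA scalerA.
  congr (_ *: _); rewrite -/(sq t) -mulrA -expr2 exprVn sqr_sqrtr ?ltW //.
rewrite S_eq Sk_eq.
have [_ hdk hik] := Lmx_props odw (fun t => lpos (w t)).
have [_ hdS hiS] := Lmx_props oe apos.
rewrite /gstar (KL_shift phi_ge0 phi_meas E_pos hE hS hdk hdS).
apply: leeDl; rewrite lee_fin.
rewrite !cst_Lmx //.
rewrite hik hiS bilD bilN !bil_Lmx.
have mpos t : 0 < quad Sstar (e t).
  rewrite /quad; apply: hSpd; apply: dot_nz; rewrite oe eqxx mulr1n //.
have := mainC od heig lpos hord hk1 hkn oe apos mpos.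
rewrite (big_ord_narrow hkn).
have -> : \sum_(t < k) ((lam (w t))^-1 - 1) * quad Sstar (d (w t)) =
    \sum_(t < k) (1 - lam (w t)).
  by apply: eq_bigr => t _; rewrite quadd mulrBl mulVf ?gt_eqF // mul1r.
have -> : \sum_(t < k) ell (lam (widen_ord hkn t)) =
    \sum_(t < k) ln (lam (w t)) + \sum_(t < k) (1 - lam (w t)).
  by rewrite -big_split; apply: eq_bigr => t _; rewrite /ell /=; ring.
have -> : \sum_(t < k) (ln (al t) + ((al t)^-1 - 1) * quad Sstar (e t)) =
   \sum_(t < k) ln (al t) + \sum_(t < k) ((al t)^-1 - 1) * quad Sstar (e t).
  by rewrite big_split.
lra.
Qed.
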